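(* The pair $\langle \alpha^{\mathsf{v}}, \gamma^{\mathsf{v}}\rangle$ forms a Galois connection between the concrete domain $\mathcal{C}$ and the view domain $\mathcal{A}^{\mathsf{v}}$.
   Context: Setting (heap programs): $\mathit{Var}=\mathit{Var}_p\uplus\mathit{Var}_d$ are pointer/data program variables, $\mathit{Fld}=\mathit{Fld}_p\uplus\mathit{Fld}_d$ pointer/data fields, $\mathit{Addr}$ a set of addresses containing $\mathsf{null}$, $\mathit{Val}=\mathit{Addr}\uplus\mathbb{Z}$, $\mathit{Loc}$ a finite set of control locations. A stack $s:\mathit{Var}\to\mathit{Val}$ is safe if $s(\mathit{Var}_p)\subseteq\mathit{Addr}$ and $s(\mathit{Var}_d)\subseteq\mathbb{Z}$. A heap is a partial map $h:\mathit{Addr}\rightharpoonup\mathit{FldVal}$ with $\mathit{FldVal}=(\mathit{Fld}\uplus\{\mathsf{free}\})\to\mathit{Val}$; it is safe if for all $a\in\mathrm{dom}(h)$, $h(a)(\mathit{Fld}_p)\subseteq\mathit{Addr}\cap\mathrm{dom}(h)$ and $h(a)(\mathit{Fld}_d\uplus\{\mathsf{free}\})\subseteq\mathbb{Z}$; $\mathit{Heap}$ is the set of safe heaps. A state is $\langle\ell,\langle s,h\rangle\rangle$ with $\ell\in\mathit{Loc}$, $s$ a safe stack, $h$ a safe heap and $\mathrm{rng}(s)\cap\mathit{Addr}\subseteq\mathrm{dom}(h)$; $\mathit{State}$ is the set of states. The concrete domain is $\mathcal{C}=\mathcal{P}(\mathit{State})\cup\{\top\}$ ordered by $X\sqsubseteq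 Y$ iff ($X,Y$ are sets and $X\subseteq Y$) or $Y=\top$. View abstraction: the view states are $\mathit{State}^{\mathsf{v}}=\mathit{Loc}\times\{\top\}\cup\{\langle\ell,\langle s,h\rangle\rangle \mid \mathrm{dom}(h)=s(\mathit{Var}_p)\}$ (the view heap $h$ may point outside its domain, so need not be safe). The abstract domain is $\mathcal{A}^{\mathsf{v}}=(\mathcal{P}(\mathit{State}^{\mathsf{v}})\times\mathcal{P}(\mathit{Addr}\times\mathit{FldVal}))\cup\{\top\}$, ordered by componentwise subset inclusion with $\top$ as top element; it is a complete lattice. For a view heap $h$ and $H\subseteq\mathit{Addr}\times\mathit{FldVal}$ (the space invariant), the completion $H\triangleright h$ is the set of safe heaps $h'$ with $h'=h\uplus h''$ for some $h''\in\mathit{Heap}$ whose graph is contained in $H$. The concretization is $\gamma^{\mathsf{v}}(\Sigma,H)=\{\langle\ell,\langle s,h'\rangle\rangle \mid \langle\ell,\langle s,h\rangle\rangle\in\Sigma \wedge h'\in H\triangleright h\}$ and $\gamma^{\mathsf{v}}(\top)=\top$. The abstraction $\alpha^{\mathsf{v}}:\mathcal{C}\to\mathcal{A}^{\mathsf{v}}$ is defined as $\alpha^{\mathsf{v}}(\Sigma)=$ the greatest lower bound (meet) in $\mathcal{A}^{\mathsf{v}}$ of the set $\{V\in\mathcal{A}^{\mathsf{v}} \mid \Sigma\sqsubseteq\gamma^{\mathsf{v}}(V)\}$. *)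

(* Defs.v *)
From Stdlib Require Import ZArith List FinFun ClassicalEpsilon.
Set Implicit Arguments.

(** The standing setting: Var = Var_p ⊎ Var_d (ptrVar x = true iff x ∈ Var_p),
    Fld = Fld_p ⊎ Fld_d (ptrFld f = true iff f ∈ Fld_p), Addr ∋ null,
    Loc a finite set of control locations. *)
Record Setting := {
  Var : Type; ptrVar : Var -> bool;
  Fld : Type; ptrFld : Fld -> bool;
  Addr : Type; null : Addr;
  Loc : Type; Loc_finite : Finite Loc }.

Section Heaps.
Variable S : Setting.

Definition Val : Type := (Addr S + Z)%type.
Definition isAddr (v : Val) : Prop := match v with inl _ => True | inr _ => False end.
Definition isInt (v : Val) : Prop := match v with inl _ => False | inr _ => True end.

(** FldVal = (Fld ⊎ {free}) -> Val; [None] stands for the extra field [free]. *)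
Definition FldVal : Type := option (Fld S) -> Val.
Definition Stack : Type := Var S -> Val.
Definition PHeap : Type := Addr S -> option FldVal.
Definition dom (h : PHeap) (a : Addr S) : Prop := h a <> None.

Definition safe_stack (s : Stack) : Prop :=
  forall x, if ptrVar S x then isAddr (s x) else isInt (s x).

Definition safe_heap (h : PHeap) : Prop :=
  forall a fv, h a = Some fv ->
    (forall f, ptrFld S f = true ->
        match fv (Some f) with inl a' => dom h a' | inr _ => False end) /\
    (forall f, ptrFld S f = false -> isInt (fv (Some f))) /\
    isInt (fv None).

Definition isState (st : Loc S * (Stack * PHeap)) : Prop :=
  let '(l, (s, h)) := st in
  safe_stack s /\ safe_heap h /\ (forall x a, s x = inl a -> dom h a).

Definition State : Type := { st : Loc S * (Stack * PHeap) | isState st }.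

(** concrete domain C = P(State) ∪ {⊤}; [None] is ⊤ *)
Definition Conc : Type := option (State -> Prop).
Definition leC (X Y : Conc) : Prop :=
  match Y with
  | None => True
  | Some y => match X with None => False | Some x => forall st, x st -> y st end
  end.

(** view states: Loc × {⊤} ∪ {⟨ℓ,⟨s,h⟩⟩ | dom(h) = s(Var_p)} *)
Inductive VRaw : Type :=
| VTop : Loc S -> VRaw
| VSt : Loc S -> Stack -> PHeap -> VRaw.

Definition isViewState (v : VRaw) : Prop :=
  match v with
  | VTop _ => True
  | VSt _ s h =>
      (* dom(h) = s(Var_p), as subsets of Val *)
      forall v : Val, (exists a, v = inl a /\ dom h a) <->
                      (exists x, ptrVar S x = true /\ s x = v)
  end.

Definition ViewState : Type := { v : VRaw | isViewState v }.

(** A^v = (P(State^v) × P(Addr × FldVal)) ∪ {⊤}; [None] is ⊤ *)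
Definition AV : Type := option ((ViewState -> Prop) * (Addr S * FldVal -> Prop)).
Definition leA (V W : AV) : Prop :=
  match W with
  | None => True
  | Some (Sg2, H2) =>
      match V with
      | None => False
      | Some (Sg1, H1) => (forall v, Sg1 v -> Sg2 v) /\ (forall p, H1 p -> H2 p)
      end
  end.

(** completion H ▷ h : safe heaps h' = h ⊎ h'' with h'' ∈ Heap and graph(h'') ⊆ H *)
Definition completion (H : Addr S * FldVal -> Prop) (h h' : PHeap) : Prop :=
  safe_heap h' /\
  exists h'' : PHeap,
    safe_heap h'' /\
    (forall a fv, h'' a = Some fv -> H (a, fv)) /\
    (forall a, dom h a -> h'' a = None) /\
    (forall a, h' a = match h a with Some fv => Some fv | None => h'' a end).

Definition gammaV (V : AV) : Conc :=
  match V with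
  | None => None
  | Some (Sg, H) =>
      Some (fun st : State =>
        let '(l, (s, h')) := proj1_sig st in
        exists (vs : ViewState) (h : PHeap),
          proj1_sig vs = VSt l s h /\ Sg vs /\ completion H h h')
  end.

Definition meetA (P : AV -> Prop) : AV :=
  if excluded_middle_informative (exists p, P (Some p)) then
    Some ((fun v => forall p, P (Some p) -> fst p v),
          (fun x => forall p, P (Some p) -> snd p x))
  else None.

Definition alphaV (X : Conc) : AV := meetA (fun V => leC X (gammaV V)).

End Heaps.

Definition galois_connection {A B : Type} (leA' : A -> A -> Prop) (leB' : B -> B -> Prop)
  (alpha : A -> B) (gamma : B -> A) : Prop :=
  forall (a : A) (b : B), leB' (alpha a) b <-> leA' a (gamma b).

(* Main.v *)
Require Import Defs.
From Stdlib Require Import ZArith List FinFun ClassicalEpsilon.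
From Stdlib Require Import FunctionalExtensionality ProofIrrelevance.

Lemma view_uniq (S : Setting) l s (h' : PHeap S) (vs1 vs2 : ViewState S) h1 h2 H1 H2 :
  proj1_sig vs1 = VSt l s h1 -> proj1_sig vs2 = VSt l s h2 ->
  completion H1 h1 h' -> completion H2 h2 h' -> vs1 = vs2 /\ h1 = h2.
Proof.
  intros E1 E2 [_ [k1 [_ [_ [D1 Q1]]]]] [_ [k2 [_ [_ [D2 Q2]]]]].
  assert (Hd : forall a, dom h1 a <-> dom h2 a).
  { destruct vs1 as [r1 p1], vs2 as [r2 p2]; simpl in *; subst.
    simpl in p1, p2. intro a. split; intro Ha.
    - destruct (proj1 (p1 (inl a)) (ex_intro _ a (conj eq_refl Ha))) as [x Hx].
      destruct (proj2 (p2 (inl a)) (ex_intro _ x Hx)) as [b [Eb Hb]].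
      injection Eb; intros; subst; auto.
    - destruct (proj1 (p2 (inl a)) (ex_intro _ a (conj eq_refl Ha))) as [x Hx].
      destruct (proj2 (p1 (inl a)) (ex_intro _ x Hx)) as [b [Eb Hb]].
      injection Eb; intros; subst; auto. }
  assert (Eh : h1 = h2).
  { extensionality a. specialize (Q1 a). specialize (Q2 a).
    destruct (h1 a) eqn:A1.
    - assert (dom h2 a) as Hd2 by (apply Hd; unfold dom; rewrite A1; discriminate).
      destruct (h2 a) eqn:A2; [congruence| exfalso; apply Hd2; auto].
    - destruct (h2 a) eqn:A2; auto.
      exfalso. assert (dom h1 a) as Hd1 by (apply Hd; unfold dom; rewrite A2; discriminate).
      apply Hd1; auto. }
  subst h2. split; auto.
  destruct vs1 as [r1 p1], vs2 as [r2 p2]; simpl in *; subst.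
  f_equal. apply proof_irrelevance.
Qed.

Lemma rest_uniq (S : Setting) (h h' k1 k2 : PHeap S) a fv :
  k1 a = Some fv ->
  (forall a, dom h a -> k1 a = None) ->
  (forall a, h' a = match h a with Some fv => Some fv | None => k1 a end) ->
  (forall a, h' a = match h a with Some fv => Some fv | None => k2 a end) ->
  k2 a = Some fv.
Proof.
  intros K D Q1 Q2. specialize (Q1 a). specialize (Q2 a).
  destruct (h a) eqn:A.
  - rewrite D in K; [discriminate|]. unfold dom; rewrite A; discriminate.
  - congruence.
Qed.

Theorem proposition4p1 (S : Setting) :
  galois_connection (@leC S) (@leA S) (@alphaV S) (@gammaV S).
Proof.
  intros X V. unfold alphaV, meetA.
  destruct excluded_middle_informative as [[p0 Hp0]|Hn].
  - split.
    + intro Hle. destruct V as [[Sg H]|]; [|destruct X; exact I].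
      simpl in Hle. destruct Hle as [HS HH].
      destruct X as [x|]; [|destruct p0; simpl in Hp0; contradiction].
      simpl. intros [[l [s h']] Hst] Hx. simpl.
      destruct p0 as [Sg0 H0]. pose proof (Hp0 _ Hx) as Hp. simpl in Hp.
      destruct Hp as (vs0 & h0 & E0 & HS0 & C0).
      exists vs0, h0. split; [exact E0|]. split.
      * apply HS. intros [Sgp Hpp] Pp. simpl.
        specialize (Pp _ Hx); simpl in Pp.
        destruct Pp as (vs1 & h1 & E1 & HS1 & C1).
        destruct (view_uniq _ _ _ _ _ _ _ _ _ _ E1 E0 C1 C0) as [-> _]. exact HS1.
      * destruct C0 as [Sf [k0 [Sk0 [G0 [D0 Q0]]]]].
        split; [exact Sf|]. exists k0. split; [exact Sk0|]. split; [|split; auto].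
        intros a fv Ka. apply HH. intros [Sgp Hpp] Pp. simpl.
        specialize (Pp _ Hx); simpl in Pp.
        destruct Pp as (vs1 & h1 & E1 & HS1 & C1).
        assert (C0' : completion H0 h0 h') by (split; [exact Sf|exists k0; auto]).
        destruct (view_uniq _ _ _ _ _ _ _ _ _ _ E1 E0 C1 C0') as [_ ->].
        destruct C1 as [_ [k1 [_ [G1 [_ Q1]]]]].
        apply G1. exact (rest_uniq _ _ _ _ _ _ _ Ka D0 Q0 Q1).
    + intro Hle. destruct V as [[Sg H]|]; [|exact I]. simpl.
      split; intros v Hv; exact (Hv (Sg, H) Hle).
  - split.
    + intro Hle. destruct V as [[? ?]|]; [simpl in Hle; contradiction|]. destruct X; exact I.
    + intro Hle. destruct V as [p|]; [|exact I].
      exfalso; apply Hn; exists p; exact Hle.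
Qed.
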